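(* Let $H$ be a $d$-uniform hypergraph, $k$ a field, and fix any term order on $k[t_e: e\in E(H)]$. Every polynomial in the reduced Gröbner basis of $I_H$ with respect to that term order is, up to sign, equal to $f_{\mathcal W}$ for some primitive monomial walk $\mathcal W$ on $H$.
   Context: A hypergraph $H$ on the vertex set $V=\{x_1,\dots,x_n\}$ is $d$-uniform if every edge has exactly $d$ vertices, and each edge $e$ corresponds to the monomial $x^e=\prod_{x_j\in e}x_j$. The toric ideal $I_H$ is the kernel of the ring map $k[t_e: e\in E(H)]\to k[x_1,\dots,x_n]$, $t_e\mapsto x^e$. A monomial walk on $H$ is a sequence $(e_1,\dots,e_{2k})$ of edges of $H$ satisfying: - repetitions are allowed; - each $e_i$ with $i\ge2$ meets $e_1\cup\dots\cup e_{i-1}$; - every covered vertex lies in equally many odd-indexed (blue) as even-indexed (red) edges. Its binomial is $f_{\mathcal W}=\prod_i t_{e_{2i-1}}-\prod_i t_{e_{2i}}$. A bicoloured multiset of edges is balanced if every covered vertex lies in equally many red and blue edges, counted with multiplicity. A monomial walk is primitive if no nonempty proper sub-multiset of its edges, with colours kept, is balanced. *)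

(* Defs.v *)
From HB Require Import structures.
From mathcomp Require Import all_boot all_order all_algebra.
Set Implicit Arguments. Unset Strict Implicit. Unset Printing Implicit Defensive.
Import GRing.Theory.
Local Open Scope ring_scope.

(* A monomial t^a is an exponent vector a : E -> nat. *)
Definition mono (E : finType) := {ffun E -> nat}.

Definition mono0 (E : finType) : mono E := [ffun _ => 0%N].
Definition monoM (E : finType) (a b : mono E) : mono E := [ffun e => (a e + b e)%N].
Definition mdvd (E : finType) (a b : mono E) : bool := [forall e, (a e <= b e)%N].

Record mpoly (k : fieldType) (E : finType) := Poly {
  pcoef : mono E -> k;
  psupp : seq (mono E);
  psuppP : forall a, pcoef a != 0 -> a \in psupp }.

Definition pnonzero (k : fieldType) (E : finType) (p : mpoly k E) : Prop :=
  exists a, pcoef p a != 0.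

Definition term_order (E : finType) (lt : rel (mono E)) : Prop :=
  [/\ (forall a, ~~ lt a a),
      (forall a b c, lt a b -> lt b c -> lt a c),
      (forall a b, a != b -> lt a b || lt b a),
      (forall a b c, lt a b -> lt (monoM a c) (monoM b c)) &
      (forall a, a != mono0 E -> lt (mono0 E) a)].

Definition is_lead (k : fieldType) (E : finType) (lt : rel (mono E))
  (p : mpoly k E) (a : mono E) : Prop :=
  pcoef p a != 0 /\ (forall b, pcoef p b != 0 -> b != a -> lt b a).

(* G is the reduced Groebner basis of the ideal I (given as a predicate on
   polynomials) w.r.t. lt:  G is contained in I, in(I) is generated by the
   leading monomials of G (for a monomial ideal: every leading monomial of a
   nonzero element of I is divisible by a leading monomial of some g in G),
   every g is monic, and no monomial of g is divisible by the leading monomial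
   of another element g' of G. *)
Definition reduced_groebner (k : fieldType) (E : finType) (lt : rel (mono E))
  (I : mpoly k E -> Prop) (G : mpoly k E -> Prop) : Prop :=
  [/\ (forall g, G g -> I g),
      (forall g, G g -> exists a, is_lead lt g a /\ pcoef g a = 1),
      (forall f, I f -> pnonzero f ->
          exists g, G g /\ exists a b, [/\ is_lead lt g a, is_lead lt f b & mdvd a b]) &
      (forall g g', G g -> G g' -> (exists c, pcoef g c != pcoef g' c) ->
          forall a c, is_lead lt g' a -> pcoef g c != 0 -> ~~ mdvd a c)].

Definition uniform (V : finType) (d : nat) (H : {set {set V}}) : Prop :=
  forall e, e \in H -> #|e| = d.

(* the edge type (index set of the variables t_e) *)
Notation edge H := {e : {set _} | e \in H}.

(* image of t^a under t_e |-> x^e : the exponent vector of x *)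
Definition timg (V : finType) (H : {set {set V}}) (a : mono (edge H))
  : {ffun V -> nat} :=
  [ffun v => \sum_(e : edge H) a e * (v \in val e)]%N.

(* p is in the kernel I_H of k[t_e] -> k[x], t_e |-> x^e : every coefficient
   of the image polynomial vanishes (this is literally the image of p). *)
Definition in_toric (k : fieldType) (V : finType) (H : {set {set V}})
  (p : mpoly k (edge H)) : Prop :=
  forall b : {ffun V -> nat},
    \sum_(a <- undup (psupp p) | timg a == b) pcoef p a = 0.

(* colouring of the positions of a walk: position i (0-based) gets colour
   odd i; false = blue (odd 1-based index), true = red (even 1-based index) *)
Definition coloured (V : finType) (H : {set {set V}}) (w : seq (edge H))
  : seq (bool * edge H) := zip (mkseq odd (size w)) w.

Definition balanced (V : finType) (H : {set {set V}}) (s : seq (bool * edge H))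
  : Prop :=
  forall v : V, count (fun p : bool * edge H => ~~ p.1 && (v \in val p.2)) s =
                count (fun p : bool * edge H => p.1 && (v \in val p.2)) s.

Definition monomial_walk (V : finType) (H : {set {set V}}) (w : seq (edge H))
  : Prop :=
  [/\ (0 < size w)%N, ~~ odd (size w),
      (forall s1 e s2, w = s1 ++ e :: s2 -> s1 != [::] ->
          has (fun e' : edge H => val e :&: val e' != set0) s1) &
      balanced (coloured w)].

Definition primitive_walk (V : finType) (H : {set {set V}}) (w : seq (edge H))
  : Prop :=
  forall m : bitseq, size m = size w -> has id m -> ~~ all id m ->
    ~ balanced (mask m (coloured w)).

(* exponent of the blue (c = false) / red (c = true) monomial of f_W *)
Definition walk_expo (V : finType) (H : {set {set V}}) (c : bool)
  (w : seq (edge H)) : mono (edge H) :=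
  [ffun e => count (fun p : bool * edge H => (p.1 == c) && (p.2 == e)) (coloured w)].

(* coefficients of f_W = t^(blue) - t^(red) *)
Definition walk_binom (k : fieldType) (V : finType) (H : {set {set V}})
  (w : seq (edge H)) (a : mono (edge H)) : k :=
  (a == walk_expo false w)%:R - (a == walk_expo true w)%:R.

(* Main.v *)
Require Import Defs.
From HB Require Import structures.
From mathcomp Require Import all_boot all_order all_algebra.
From mathcomp Require Import zify.
From Stdlib Require Import Classical.
Import GRing.Theory.

Set Implicit Arguments. Unset Strict Implicit.

Section TO.
Local Open Scope ring_scope.
Variables (E : finType) (lt : rel (mono E)) (hlt : term_order lt).

Lemma lt_irr a : ~~ lt a a. Proof. by case: hlt. Qed.
Lemma lt_trans a b c : lt a b -> lt b c -> lt a c.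
Proof. case: hlt => _ h _ _ _; exact: h. Qed.
Lemma lt_total a b : a != b -> lt a b || lt b a.
Proof. case: hlt => _ _ h _ _; exact: h. Qed.
Lemma lt_addr a b c : lt a b -> lt (monoM a c) (monoM b c).
Proof. case: hlt => _ _ _ h _; exact: h. Qed.
Lemma lt0 a : a != mono0 E -> lt (mono0 E) a.
Proof. case: hlt => _ _ _ _ h; exact: h. Qed.
Lemma monoMC (a b : mono E) : monoM a b = monoM b a.
Proof. by apply/ffunP => e; rewrite !ffunE addnC. Qed.
Lemma monoM0 (a : mono E) : monoM a (mono0 E) = a.
Proof. by apply/ffunP => e; rewrite !ffunE addn0. Qed.
Lemma lt_addl a b c : lt a b -> lt (monoM c a) (monoM c b).
Proof. by move=> h; rewrite ![monoM c _]monoMC; apply: lt_addr. Qed.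
Lemma lt_ne a b : lt a b -> a != b.
Proof. by move=> h; apply/eqP => e; move: h; rewrite e; apply/negP/lt_irr. Qed.
Lemma lt_asym a b : lt a b -> ~~ lt b a.
Proof. by move=> h; apply/negP => h'; move: (lt_trans h h'); apply/negP/lt_irr. Qed.

Definition msub (a b : mono E) : mono E := [ffun e => (a e - b e)%N].

Lemma mdvd_le a c : mdvd a c -> a = c \/ lt a c.
Proof.
move/forallP => h.
have Hc : c = monoM a (msub c a) by apply/ffunP=> e; rewrite !ffunE subnKC.
case: (eqVneq (msub c a) (mono0 E)) => [h0|hn].
  by left; rewrite Hc h0 monoM0.
by right; have := lt_addl a (lt0 hn); rewrite -Hc monoM0.
Qed.

Lemma lead_uniq (k : fieldType) (p : mpoly k E) a b :
  is_lead lt p a -> is_lead lt p b -> a = b.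
Proof.
move=> [ha Ha] [hb Hb]; apply/eqP; apply/negPn/negP => ne.
have ne' : b != a by rewrite eq_sym.
by have := lt_asym (Hb a ha ne); rewrite (Ha b hb ne').
Qed.

Lemma min_seq (s : seq (mono E)) x : x \in s ->
  exists2 m, m \in s & forall y, y \in s -> y != m -> lt m y.
Proof.
elim: s x => [//|y s IH] x _.
case: s IH => [|z s] IH.
  by exists y; rewrite ?mem_head // => y'; rewrite inE => ->.
have [m ms hm] := IH z (mem_head _ _).
case: (eqVneq y m) => [eym|nym].
  exists m; first by rewrite inE ms orbT.
  by move=> y'; rewrite inE => /orP [/eqP ->|]; [rewrite eym eqxx|exact: hm].
case/orP: (lt_total nym) => hl.
  exists y; first exact: mem_head.
  move=> y'; rewrite inE => /orP [/eqP ->|ys]; first by rewrite eqxx.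
  move=> _; case: (eqVneq y' m) => [->//|nm]; exact: lt_trans hl (hm _ ys nm).
exists m; first by rewrite inE ms orbT.
move=> y'; rewrite inE => /orP [/eqP -> _|]; [exact: hl|exact: hm].
Qed.
End TO.


Section Poly.
Local Open Scope ring_scope.
Variables (k : fieldType) (E : finType).

Lemma sum_nz (s : seq (mono E)) (P : pred (mono E)) (F : mono E -> k) x :
  uniq s -> \sum_(y <- s | P y) F y = 0 -> x \in s -> P x -> F x != 0 ->
  exists y, [/\ y \in s, y != x, P y & F y != 0].
Proof.
move=> us hs xs Px Fx.
case: (boolP (has (fun y => [&& y != x, P y & F y != 0]) s)).
  by case/hasP => y ys /and3P [h1 h2 h3]; exists y.
move/hasPn => hn; exfalso; move/eqP: Fx; apply.
rewrite big_mkcond (bigD1_seq x) //= Px in hs; rewrite -[F x]addr0 -{2}hs; congr (_ + _).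
rewrite big_seq_cond; apply/esym/big1 => y /andP [ys nyx].
case: ifP => // Py.
by apply/eqP; apply/negPn/negP => h; move: (hn y ys); rewrite nyx Py h.
Qed.

Lemma sum_supp (s t : seq (mono E)) (P : pred (mono E)) (F : mono E -> k) :
  uniq s -> uniq t -> (forall x, F x != 0 -> x \in s) -> (forall x, F x != 0 -> x \in t) ->
  \sum_(y <- s | P y) F y = \sum_(y <- t | P y) F y.
Proof.
move=> us ut hs ht; apply: perm_big_supp; apply: uniq_perm; rewrite ?filter_uniq //.
move=> x; rewrite !mem_filter; case: (boolP (F x != 0)) => //= h.
by rewrite hs ?ht.
Qed.

Definition binom (u v : mono E) : mpoly k E.
refine (@Defs.Poly _ _ (fun x : mono E => ((x == u)%:R - (x == v)%:R : k)) [:: u; v] _).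
move=> a; rewrite !inE; case: (a == u); case: (a == v) => //=.
by rewrite subrr eqxx.
Defined.

Lemma binomE u v x : pcoef (binom u v) x = (x == u)%:R - (x == v)%:R.
Proof. by []. Qed.
Definition psub (p q : mpoly k E) : mpoly k E.
refine (@Defs.Poly _ _ (fun x : mono E => pcoef p x - pcoef q x) (psupp p ++ psupp q) _).
move=> a; rewrite mem_cat => h.
case: (boolP (pcoef p a != 0)) => [/psuppP -> //|]; rewrite negbK => /eqP hp.
by rewrite hp sub0r oppr_eq0 in h; rewrite (psuppP h) orbT.
Defined.

Lemma psubE p q x : pcoef (psub p q) x = pcoef p x - pcoef q x.
Proof. by []. Qed.
End Poly.


Section Hyp.
Local Open Scope ring_scope.
Variables (V : finType) (H : {set {set V}}) (d : nat) (hd : (0 < d)%N) (hH : uniform d H).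

Lemma timgM (a b : mono (edge H)) v : timg (monoM a b) v = (timg a v + timg b v)%N.
Proof. by rewrite !ffunE -big_split; apply: eq_bigr => e _; rewrite ffunE mulnDl. Qed.

Lemma edge_ne (e : edge H) : exists v, v \in val e.
Proof. by apply/card_gt0P; rewrite (hH (valP e)). Qed.

Lemma timg_ge (a : mono (edge H)) (e : edge H) (v : V) : v \in val e -> (a e <= timg a v)%N.
Proof. by move=> ve; rewrite ffunE (bigD1 e) //= ve muln1 leq_addr. Qed.

Lemma timg0 (a : mono (edge H)) : (forall v, timg a v = 0%N) -> a = mono0 _.
Proof.
move=> h; apply/ffunP => e; rewrite ffunE; have [v ve] := edge_ne e.
by apply/eqP; rewrite -leqn0 -(h v) timg_ge.
Qed.

Lemma sum_timg (a : mono (edge H)) : (\sum_v timg a v = d * \sum_e a e)%N.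
Proof.
under eq_bigr do rewrite ffunE.
rewrite exchange_big big_distrr /=; apply: eq_bigr => e _.
rewrite -big_distrr /= mulnC; congr (_ * _)%N.
rewrite -(hH (valP e)) -sum1_card [RHS]big_mkcond /=.
by apply: eq_bigr => v _; case: (v \in val e).
Qed.

Lemma timg_sub (a b : mono (edge H)) v : (forall e, b e <= a e)%N ->
  timg (msub a b) v = (timg a v - timg b v)%N.
Proof.
move=> h; have -> : a = monoM b (msub a b) by apply/ffunP => e; rewrite !ffunE subnKC.
rewrite timgM addKn; congr (timg _ v); apply/ffunP => e; rewrite !ffunE.
by rewrite addKn.
Qed.

Variable k : fieldType.

Lemma binom_toric (u v : mono (edge H)) : timg u = timg v -> in_toric (binom k u v).
Proof.
move=> huv b; case: (eqVneq u v) => [<-|nuv].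
  by apply: big1 => x _; rewrite binomE subrr.
rewrite /= mem_seq1 (negbTE nuv) !big_cons big_nil /=.
rewrite !eqxx (negbTE nuv) (eq_sym v u) (negbTE nuv) huv.
by case: ifP; rewrite ?subr0 ?sub0r ?addr0 ?subrr // => ->; rewrite ?subrr // addrN.
Qed.

Lemma toric_nz (p : mpoly k (edge H)) x : in_toric p -> pcoef p x != 0 ->
  exists y, [/\ y != x, pcoef p y != 0 & timg y = timg x].
Proof.
move=> hp px.
have [|y [_ h1 h2 h3]] := sum_nz (undup_uniq _) (hp (timg x)) _ (eqxx _) px.
  by rewrite mem_undup psuppP.
by exists y; split => //; apply/eqP.
Qed.
Lemma toric_sub (p q : mpoly k (edge H)) : in_toric p -> in_toric q -> in_toric (psub p q).
Proof.
move=> hp hq b; rewrite /= sumrB.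
have s1 : forall x, pcoef p x != 0 -> x \in undup (psupp (psub p q)).
  by move=> x /psuppP; rewrite mem_undup /= mem_cat => ->.
have s2 : forall x, pcoef q x != 0 -> x \in undup (psupp (psub p q)).
  by move=> x /psuppP; rewrite mem_undup /= mem_cat => ->; rewrite orbT.
have t1 : forall x, pcoef p x != 0 -> x \in undup (psupp p).
  by move=> x /psuppP; rewrite mem_undup.
have t2 : forall x, pcoef q x != 0 -> x \in undup (psupp q).
  by move=> x /psuppP; rewrite mem_undup.
rewrite (sum_supp _ (undup_uniq _) (undup_uniq (psupp p)) s1 t1).
rewrite (sum_supp _ (undup_uniq _) (undup_uniq (psupp q)) s2 t2).
by rewrite hp hq subrr.
Qed.
End Hyp.


Section GB.
Local Open Scope ring_scope.
Variables (k : fieldType) (V : finType) (d : nat) (H : {set {set V}})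
  (hd : (0 < d)%N) (hH : uniform d H) (lt : rel (mono (edge H))) (hlt : term_order lt)
  (G : mpoly k (edge H) -> Prop) (hG : reduced_groebner lt (@in_toric k V H) G).

Definition Pprop (a b : mono (edge H)) := forall u v : mono (edge H),
  (forall e, u e <= a e)%N -> (forall e, v e <= b e)%N -> timg u = timg v ->
  (u = mono0 _ /\ v = mono0 _) \/ (u = a /\ v = b).

Lemma fiber_fin (a : mono (edge H)) : exists L : seq (mono (edge H)),
  forall c, (c \in L) = (timg c == timg a).
Proof.
pose N := (\sum_v timg a v)%N.
pose F (f : {ffun edge H -> 'I_N.+1}) : mono (edge H) := [ffun e => nat_of_ord (f e)].
exists [seq c <- map F (enum {ffun edge H -> 'I_N.+1}) | timg c == timg a].
move=> c; rewrite mem_filter; case: eqP => //= tc.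
have -> : c = F [ffun e => inord (c e)].
  apply/ffunP => e; rewrite !ffunE inordK //.
  have [v ve] := edge_ne hd hH e.
  rewrite ltnS (leq_trans (timg_ge c ve)) // tc /N.
  by rewrite (bigD1 v) //= leq_addr.
by rewrite map_f ?mem_enum.
Qed.

Lemma mdvdP (a b : mono (edge H)) : reflect (forall e, a e <= b e)%N (mdvd a b).
Proof. exact: forallP. Qed.

Lemma monoM_sub (a u : mono (edge H)) : (forall e, u e <= a e)%N -> monoM u (msub a u) = a.
Proof. by move=> h; apply/ffunP => e; rewrite !ffunE subnKC. Qed.

Lemma timg_mono0 v : timg (mono0 (edge H)) v = 0%N.
Proof. by rewrite ffunE big1 // => e _; rewrite ffunE. Qed.

Lemma natsub0 (m n : nat) : (m - n = 0 -> n <= m -> n = m)%N.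
Proof. lia. Qed.
Lemma natsubid (m n : nat) : (m - n = m -> n <= m -> n = 0)%N.
Proof. lia. Qed.

Lemma gb_binom g : G g -> exists a b, [/\ lt b a, timg a = timg b,
  (forall x, pcoef g x = (x == a)%:R - (x == b)%:R) & Pprop a b].
Proof.
move=> Gg; case: hG => G1 G2 G3 G4.
have [a [[ga Ha] ga1]] := G2 g Gg.
have [L HL] := fiber_fin a.
have aL : a \in L by rewrite HL.
have [b bL bmin] := min_seq hlt aL.
have tb : timg b = timg a by apply/eqP; rewrite -HL.
have bmin' : forall c, timg c = timg a -> c != b -> lt b c.
  by move=> c hc; apply: bmin; rewrite HL hc.
have std : forall g' a', G g' -> is_lead lt g' a' -> ~~ mdvd a' b.
  move=> g' a' Gg' [ga' Ha']; apply/negP => /mdvdP dv.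
  have [c' [nc' gc' tc']] := toric_nz (G1 _ Gg') ga'.
  have lc := Ha' _ gc' nc'.
  have hb := monoM_sub dv.
  have ltcb : lt (monoM c' (msub b a')) b by rewrite -{2}hb; apply: lt_addr.
  have tc : timg (monoM c' (msub b a')) = timg a.
    by apply/ffunP => v; rewrite timgM -tb -{2}hb timgM tc'.
  have := bmin' _ tc (lt_ne hlt ltcb).
  by move/(lt_asym hlt); rewrite ltcb.
have [y [ny gy ty]] := toric_nz (G1 _ Gg) ga.
have lya := Ha y gy ny.
have nba : b != a.
  apply/eqP => eba; have := bmin' y ty; rewrite eba => /(_ ny) h.
  by move: (lt_asym hlt h); rewrite lya.
have lba : lt b a by apply: bmin'; rewrite // eq_sym.
have same_lead : forall g'' a'', G g'' -> is_lead lt g'' a'' ->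
    ~ (exists c, pcoef g c != pcoef g'' c) -> a'' = a.
  move=> g'' a'' _ [h1 h2] hno.
  have e : forall c, pcoef g c = pcoef g'' c.
    by move=> c; apply/eqP; apply/negPn/negP => ne; apply: hno; exists c.
  apply: (lead_uniq hlt (p := g)) => //; split; first by rewrite e.
  by move=> c; rewrite e; apply: h2.
have gE : forall x, pcoef g x = (x == a)%:R - (x == b)%:R.
  move=> x; set h := psub g (binom k a b).
  have hT : in_toric h by apply: toric_sub; [exact: G1|exact: binom_toric].
  apply/eqP; rewrite -subr_eq0; apply/eqP.
  apply/eqP; apply/negPn/negP => hx.
  have [g'' [Gg'' [a'' [m [l'' [hm Hm] dv]]]]] := G3 h hT (ex_intro _ x hx).
  rewrite psubE binomE in hm.
  have nma : m != a.
    by apply/eqP => ema; move: hm; rewrite ema ga1 eqxx (eq_sym a b) (negbTE nba) subr0 subrr eqxx.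
  have nmb : m != b.
    by apply/eqP => emb; move: (std _ _ Gg'' l''); rewrite -emb dv.
  rewrite (negbTE nma) (negbTE nmb) subrr subr0 in hm.
  case: (classic (exists c, pcoef g c != pcoef g'' c)) => hc.
    by move: (G4 _ _ Gg Gg'' hc _ _ l'' hm); rewrite dv.
  have ea := same_lead _ _ Gg'' l'' hc; rewrite ea in dv.
  have lma := Ha m hm nma.
  case: (mdvd_le hlt dv) => [ema|lam]; first by rewrite ema eqxx in nma.
  by move: (lt_asym hlt lam); rewrite lma.
have Q : forall u v, mdvd u a -> timg u = timg v -> lt v u -> u = a.
  move=> u v dua tuv lvu.
  have nuv : u != v by rewrite eq_sym; apply: (lt_ne hlt).
  have bT := binom_toric k tuv.
  have bu : pcoef (binom k u v) u != 0 by rewrite binomE eqxx (negbTE nuv) subr0 oner_eq0.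
  have [g'' [Gg'' [a'' [m [l'' lm dv]]]]] := G3 _ bT (ex_intro _ u bu).
  have lu : is_lead lt (binom k u v) u.
    split => // c; rewrite binomE; case: (eqVneq c u) => [->|ncu]; first by move=> _ /eqP.
    case: (eqVneq c v) => [->|ncv] //; by rewrite subrr eqxx.
  rewrite (lead_uniq hlt lm lu) in dv.
  case: (classic (exists c, pcoef g c != pcoef g'' c)) => hc.
    move: (G4 _ _ Gg Gg'' hc _ _ l'' ga) => /mdvdP; case.
    by move: dv dua => /mdvdP dv /mdvdP dua e; exact: leq_trans (dv e) (dua e).
  have ea := same_lead _ _ Gg'' l'' hc; rewrite ea in dv.
  apply/ffunP => e; apply/eqP; rewrite eqn_leq.
  by move: dv dua => /mdvdP -> /mdvdP ->.
exists a, b; split; [exact: lba | by rewrite tb | exact: gE | ].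
move=> u v ua vb tuv.
case: (boolP (lt v u)) => hvu.
  have ua' := Q u v (introT (mdvdP _ _) ua) tuv hvu.
  right; split => //.
  have t0 : forall x, timg (msub b v) x = 0%N.
    by move=> x; rewrite timg_sub // tb -ua' tuv subnn.
  have := timg0 hd hH t0 => /ffunP h; apply/ffunP => e; move: (h e) (vb e).
  by rewrite !ffunE; apply: natsub0.
have tab : timg a = timg b by rewrite tb.
have hl : lt (msub b v) (msub a u).
  apply/negPn/negP => nl.
  have h1 : u = v \/ lt u v.
    case: (eqVneq u v) => [->|nuv]; [by left|right].
    by case/orP: (lt_total hlt nuv) => // hh; rewrite hh in hvu.
  have h2 : msub a u = msub b v \/ lt (msub a u) (msub b v).
    case: (eqVneq (msub a u) (msub b v)) => [->|nuv]; [by left|right].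
    by case/orP: (lt_total hlt nuv) => // hh; rewrite hh in nl.
  have ea := monoM_sub ua; have eb := monoM_sub vb.
  have : a = b \/ lt a b.
    rewrite -ea -eb; move: h1 h2; set x1 := msub a u; set y1 := msub b v.
    case=> [<-|l1] [<-|l2].
    - by left.
    - by right; apply: lt_addl.
    - by right; apply: lt_addr.
    - by right; apply: (@lt_trans _ _ hlt _ (monoM v x1)); [apply: lt_addr | apply: lt_addl].
  case => [eab|lab]; first by rewrite eab eqxx in nba.
  by move: (lt_asym hlt lab); rewrite lba.
have tsub : timg (msub a u) = timg (msub b v).
  by apply/ffunP => x; rewrite !timg_sub // tab tuv.
have dva : mdvd (msub a u) a by apply/mdvdP => e; rewrite ffunE leq_subr.
have := Q _ _ dva tsub hl => /ffunP hau.
have u0 : u = mono0 _.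
  by apply/ffunP => e; move: (hau e) (ua e); rewrite !ffunE; apply: natsubid.
left; split => //.
have t0 : forall x, timg v x = 0%N by move=> x; rewrite -tuv u0 timg_mono0.
by have := timg0 hd hH t0.
Qed.
End GB.


Section Walk.
Variables (V : finType) (d : nat) (H : {set {set V}})
  (hd : (0 < d)%N) (hH : uniform d H).

Definition expo (c : bool) (s : seq (bool * edge H)) : mono (edge H) :=
  [ffun e => count (fun p : bool * edge H => (p.1 == c) && (p.2 == e)) s].
Definition msize (x : mono (edge H)) := \sum_e x e.
Definition delta (e : edge H) : mono (edge H) := [ffun x => nat_of_bool (x == e)].
Definition meet (e e' : edge H) := val e :&: val e' != set0.
Definition conn (w : seq (edge H)) := forall s1 e s2, w = s1 ++ e :: s2 -> s1 != [::] ->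
  has (fun e' : edge H => val e :&: val e' != set0) s1.

Lemma count_timg c s v :
  count (fun p : bool * edge H => (p.1 == c) && (v \in val p.2)) s = timg (expo c s) v.
Proof.
elim: s => [|p s IH].
  by rewrite /= ffunE big1 // => e _; rewrite ffunE.
rewrite /= IH !ffunE.
under [RHS]eq_bigr => e _ do rewrite ffunE /= mulnDl.
rewrite big_split /=; congr (_ + _)%N; last by apply: eq_bigr => e _; rewrite ffunE.
rewrite (bigD1 p.2) //= eqxx andbT big1 ?addn0 => [|e ne].
  by case: (p.1 == c); case: (v \in _).
have ne' : p.2 != e by rewrite eq_sym.
by rewrite (negbTE ne') andbF.
Qed.

Lemma balancedP s : balanced s <-> timg (expo false s) = timg (expo true s).
Proof.
split => h.
  apply/ffunP => v; rewrite -!count_timg; move: (h v).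
  by rewrite (@eq_count _ _ (fun p : bool * edge H => (p.1 == false) && (v \in val p.2)))
    ?(@eq_count _ (fun p : bool * edge H => p.1 && (v \in val p.2))
                (fun p : bool * edge H => (p.1 == true) && (v \in val p.2)))
    // => p; case: p.1.
move=> v; move/ffunP: h => /(_ v); rewrite -!count_timg => h.
rewrite (@eq_count _ _ (fun p : bool * edge H => (p.1 == false) && (v \in val p.2))) ?h;
  last by move=> p; case: p.1.
by apply: eq_count => p; case: p.1.
Qed.

Lemma expo_cat c s t : expo c (s ++ t) = monoM (expo c s) (expo c t).
Proof. by apply/ffunP => e; rewrite !ffunE count_cat. Qed.

Lemma coloured_cat (s t : seq (edge H)) : ~~ odd (size s) ->
  coloured (s ++ t) = coloured s ++ coloured t.
Proof.
move=> ev; rewrite /coloured size_cat /mkseq iotaD map_cat zip_cat; last by rewrite size_map size_iota.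
congr (_ ++ zip _ _); rewrite add0n -[size s]addn0 iotaDl -map_comp.
by apply: eq_map => i /=; rewrite oddD (negbTE ev).
Qed.

Lemma expo2 x y : expo false (coloured [:: x; y]) = delta x /\ expo true (coloured [:: x; y]) = delta y.
Proof. by split; apply/ffunP => e; rewrite !ffunE /= addn0 ?eqxx ?andbT /= ?addn0 // eq_sym. Qed.

Lemma msizeM x y : msize (monoM x y) = (msize x + msize y)%N.
Proof. by rewrite /msize -big_split; apply: eq_bigr => e _; rewrite ffunE. Qed.

Lemma msize_delta e : msize (delta e) = 1%N.
Proof. by rewrite /msize (bigD1 e) //= big1 => [|e' ne]; rewrite ffunE ?eqxx // (negbTE ne). Qed.

Lemma timg_delta e v : timg (delta e) v = (v \in val e).
Proof.
rewrite ffunE (bigD1 e) //= big1 => [|e' ne]; first by rewrite ffunE eqxx mul1n addn0.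
by rewrite ffunE (negbTE ne).
Qed.

Lemma conn_rcons w e : conn w -> (w != [::] -> has (fun e' : edge H => val e :&: val e' != set0) w) ->
  conn (rcons w e).
Proof.
move=> cw he s1 e' s2; case/lastP: s2 => [|s2 x].
  by rewrite cats1 => /rcons_inj [<- <-].
rewrite -rcons_cons -rcons_cat => /rcons_inj [ew _]; exact: (cw _ _ _ ew).
Qed.

Lemma in_zip2 (S T : eqType) (s : seq S) (t : seq T) x y : (x, y) \in zip s t -> y \in t.
Proof.
elim: s t => [|a s IH] [|b t] //=; rewrite !inE => /orP [/eqP [_ ->]|/IH ->].
  by rewrite eqxx.
by rewrite orbT.
Qed.

Lemma expo_out c w v : ~~ has (fun e' : edge H => v \in val e') w ->
  timg (expo c (coloured w)) v = 0%N.
Proof.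
move=> hn; rewrite -count_timg -(count_pred0 (coloured w)); apply: eq_in_count.
case=> c' e' /= /in_zip2 ew; apply/negbTE; rewrite negb_and; apply/orP; right.
by apply: contra hn => ve; apply/hasP; exists e'.
Qed.

Lemma msize_pos x : (0 < msize x)%N -> exists e, (0 < x e)%N.
Proof.
move=> h; case: (pickP (fun e => 0 < x e)%N) => [e he|h0]; first by exists e.
by move: h; rewrite /msize big1 // => e _; move: (h0 e); case: (x e).
Qed.

Lemma sum_eq_le (f g : V -> nat) : (forall i, g i <= f i)%N ->
  (\sum_i f i = \sum_i g i)%N -> forall i, f i = g i.
Proof.
move=> hle heq i; apply/eqP; rewrite eqn_leq hle andbT; apply/negP => /negP.
rewrite -ltnNge => lt; move: heq; rewrite (bigD1 i) //= [X in (_ = X)%N](bigD1 i) //= => h.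
have : (g i + \sum_(j | j != i) g j < f i + \sum_(j | j != i) f j)%N.
  by rewrite -addSn leq_add // leq_sum.
by rewrite h ltnn.
Qed.

Lemma count_mask_split (P : pred (bool * edge H)) (m : bitseq) (s : seq (bool * edge H)) :
  size m = size s -> (count P (mask m s) + count P (mask (map negb m) s))%N = count P s.
Proof.
elim: m s => [|b m IH] [|p s] //= [hs].
case: b => /=; rewrite -(IH s hs); case: (P p) => /=; rewrite ?add0n ?add1n ?addn1 ?addSn ?addnS //.
Qed.
End Walk.


Section Build.
Variables (V : finType) (d : nat) (H : {set {set V}})
  (hd : (0 < d)%N) (hH : uniform d H)
  (a b : mono (edge H)) (tab : timg a = timg b) (P : Pprop a b).

Lemma sum_timg' (x : mono (edge H)) : (\sum_v timg x v = d * msize x)%N.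
Proof. exact: sum_timg hH x. Qed.

Lemma msize_eq (x y : mono (edge H)) : timg x = timg y -> msize x = msize y.
Proof.
move=> h; apply/eqP; by rewrite -(eqn_pmul2l hd) -!sum_timg' h.
Qed.

Lemma meet_of (e e' : edge H) v : v \in val e -> v \in val e' -> val e :&: val e' != set0.
Proof. by move=> h1 h2; apply/set0Pn; exists v; rewrite inE h1 h2. Qed.

Lemma coloured_cons (x : edge H) w : exists t, coloured (x :: w) = (false, x) :: t.
Proof. by rewrite /coloured /mkseq /=; eexists. Qed.

Lemma step w ra rb : ~~ odd (size w) ->
  monoM (expo false (coloured w)) ra = a -> monoM (expo true (coloured w)) rb = b ->
  msize (expo false (coloured w)) = msize (expo true (coloured w)) -> ra != mono0 _ ->
  exists e1 e2, [/\ (0 < ra e1)%N, (0 < rb e2)%N,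
    (w != [::] -> has (fun e' : edge H => val e1 :&: val e' != set0) w) &
    has (fun e' : edge H => val e2 :&: val e' != set0) (rcons w e1)].
Proof.
move=> ev ha hb hs nra.
set ua := expo false (coloured w) in ha hs *; set ub := expo true (coloured w) in hb hs *.
have tv : forall v, (timg ua v + timg ra v = timg ub v + timg rb v)%N.
  by move=> v; rewrite -!timgM ha hb tab.
have [e1 [pe1 he1]] : exists e1, (0 < ra e1)%N /\
    (w != [::] -> has (fun e' : edge H => val e1 :&: val e' != set0) w).
  case: (eqVneq w [::]) => [w0|wn].
    have [e he] : exists e, (0 < ra e)%N.
      apply: msize_pos; rewrite lt0n; apply: contra nra => /eqP h0.
      apply/eqP/ffunP => e; rewrite ffunE; apply/eqP; rewrite -leqn0 -h0 /msize.
      by rewrite (bigD1 e) //= leq_addr.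
    by exists e; split => //; rewrite w0.
  case: (boolP [exists e, (0 < ra e)%N && has (fun e' : edge H => val e :&: val e' != set0) w]).
    by case/existsP => e /andP [h1 h2]; exists e.
  rewrite negb_exists => /forallP hno; exfalso.
  have hr : forall v, has (fun e' : edge H => v \in val e') w -> timg ra v = 0%N.
    move=> v /hasP [e' e'w ve']; rewrite ffunE; apply: big1 => e _.
    case: (posnP (ra e)) => [->//|pe]; case ve: (v \in val e); last by rewrite muln0.
    move: (hno e); rewrite pe /=; case/hasP; exists e' => //; exact: meet_of ve ve'.
  have hge : forall v, (timg ub v <= timg ua v)%N.
    move=> v; case: (boolP (has (fun e' : edge H => v \in val e') w)) => hv.
      by have := tv v; rewrite (hr v hv) addn0 => ->; rewrite leq_addr.
    by rewrite !expo_out.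
  have heq := sum_eq_le hge.
  have heq' : forall v, timg ua v = timg ub v.
    by apply: heq; rewrite !sum_timg' hs.
  have := P (u := ua) (v := ub).
  case.
  - by move=> e; rewrite -ha [X in (_ <= X)%N]ffunE leq_addr.
  - by move=> e; rewrite -hb [X in (_ <= X)%N]ffunE leq_addr.
  - exact/ffunP.
  - case=> ua0 _.
    have [x [w' ew]] : exists x w', w = x :: w' by case: (w) wn => // x w' _; exists x, w'.
    move/ffunP: ua0 => /(_ x); rewrite /ua ew; case: (coloured_cons x w') => t ->.
    by rewrite !ffunE /= eqxx.
  - case=> uaa _; apply: (negP nra); apply/eqP/ffunP => e; move/ffunP: ha => /(_ e).
    rewrite uaa !ffunE => h; apply/eqP; rewrite -(eqn_add2l (a e)) addn0 h //.
exists e1.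
case: (boolP [exists e, (0 < rb e)%N &&
    has (fun e' : edge H => val e :&: val e' != set0) (rcons w e1)]).
  by case/existsP => e /andP [h1 h2]; exists e.
rewrite negb_exists => /forallP hno; exfalso.
have hr : forall v, has (fun e' : edge H => v \in val e') (rcons w e1) -> timg rb v = 0%N.
  move=> v /hasP [e' e'w ve']; rewrite ffunE; apply: big1 => e _.
  case: (posnP (rb e)) => [->//|pe]; case ve: (v \in val e); last by rewrite muln0.
  move: (hno e); rewrite pe /=; case/hasP; exists e' => //; exact: meet_of ve ve'.
have hle : forall v, (timg (monoM ua (delta e1)) v <= timg ub v)%N.
  move=> v; rewrite timgM timg_delta.
  case: (boolP (has (fun e' : edge H => v \in val e') (rcons w e1))) => hv.
    rewrite -(addn0 (timg ub v)) -(hr v hv) -tv leq_add2l.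
    case ve: (v \in val e1) => //=; exact: leq_trans pe1 (timg_ge ra ve).
  move: hv; rewrite has_rcons negb_or => /andP [/negbTE -> hv].
  by rewrite expo_out.
have : (\sum_v timg (monoM ua (delta e1)) v <= \sum_v timg ub v)%N by apply: leq_sum => v _; exact: hle.
rewrite !sum_timg' msizeM msize_delta hs leq_pmul2l // addn1 ltnn //.
Qed.
Lemma expo_app c (w : seq (edge H)) (e1 e2 : edge H) : ~~ odd (size w) ->
  expo c (coloured (w ++ [:: e1; e2])) = monoM (expo c (coloured w)) (if c then delta e2 else delta e1).
Proof.
move=> ev; rewrite coloured_cat // expo_cat; case: (expo2 e1 e2) => h1 h2.
by case: c; rewrite ?h1 ?h2.
Qed.

Lemma monoM_msub (u x y : mono (edge H)) : (forall e, y e <= x e)%N ->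
  monoM (monoM u y) (msub x y) = monoM u x.
Proof. by move=> h; apply/ffunP => e; rewrite !ffunE -addnA subnKC. Qed.

Lemma delta_le (e1 : edge H) (r : mono (edge H)) : (0 < r e1)%N -> forall e, (delta e1 e <= r e)%N.
Proof. by move=> h e; rewrite ffunE; case: eqP => [->|]. Qed.

Lemma build n : forall w ra rb, msize ra = n -> ~~ odd (size w) ->
  monoM (expo false (coloured w)) ra = a -> monoM (expo true (coloured w)) rb = b ->
  msize (expo false (coloured w)) = msize (expo true (coloured w)) -> conn w ->
  exists w', [/\ ~~ odd (size w'), expo false (coloured w') = a,
                 expo true (coloured w') = b & conn w'].
Proof.
have z : forall r : mono (edge H), msize r = 0%N -> r = mono0 _.
  move=> r hr; apply/ffunP => e; rewrite ffunE; apply/eqP.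
  by rewrite -leqn0 -hr /msize (bigD1 e) //= leq_addr.
elim: n => [|n IH] w ra rb hn ev ha hb hs cw.
  have hab := msize_eq tab; rewrite -ha -hb !msizeM hs hn in hab.
  have rb0 : msize rb = 0%N by apply/eqP; rewrite -(eqn_add2l (msize (expo true (coloured w)))) -hab.
  rewrite (z _ hn) (z _ rb0) !monoM0 in ha hb.
  by exists w; split.
have nra : ra != mono0 _.
  apply/eqP => e0; have : msize (mono0 (edge H)) = 0%N by rewrite /msize big1 // => e _; rewrite ffunE.
  by rewrite -e0 hn.
have [e1 [e2 [p1 p2 c1 c2]]] := step ev ha hb hs nra.
apply: (IH (w ++ [:: e1; e2]) (msub ra (delta e1)) (msub rb (delta e2))).
- have h := monoM_sub (delta_le p1).
  have := congr1 (@msize V H) h; rewrite msizeM msize_delta hn add1n.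
  by case.
- by rewrite size_cat /= addn2 /= negbK.
- rewrite expo_app //= monoM_msub ?ha //; exact: delta_le.
- rewrite expo_app //= monoM_msub ?hb //; exact: delta_le.
- have h1 := @expo_app false w e1 e2 ev.
  have h2 := @expo_app true w e1 e2 ev.
  rewrite h1 h2 [LHS]msizeM [RHS]msizeM hs; congr (_ + _)%N.
  by rewrite (msize_delta e1) (msize_delta e2).
- rewrite -cat_rcons cats1; apply: (conn_rcons (conn_rcons cw c1)).
  by move=> _.
Qed.
End Build.


Lemma addn_id0 m n : (m + n = m -> n = 0)%N.
Proof. by move=> h; apply/eqP; rewrite -(eqn_add2l m) addn0 h. Qed.

Section Prim.
Variables (V : finType) (d : nat) (H : {set {set V}})
  (a b : mono (edge H)) (P : Pprop a b).

Lemma prim (w : seq (edge H)) : expo false (coloured w) = a -> expo true (coloured w) = b ->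
  primitive_walk w.
Proof.
move=> ha hb m sm hm ham bal.
have ss : size m = size (coloured w) by rewrite sm /coloured size_zip size_mkseq minnn.
have sp : forall c e, (expo c (mask m (coloured w)) e + expo c (mask (map negb m) (coloured w)) e)%N
    = expo c (coloured w) e.
  by move=> c e; rewrite !ffunE count_mask_split.
move/balancedP: bal => tb.
have := P (u := expo false (mask m (coloured w))) (v := expo true (mask m (coloured w))).
case.
- by move=> e; rewrite -ha -(sp false e) leq_addr.
- by move=> e; rewrite -hb -(sp true e) leq_addr.
- exact: tb.
- case=> u0 v0.
  have : (0 < size (mask m (coloured w)))%N by rewrite size_mask // -has_count.
  case hp: (mask m (coloured w)) => [//|[c e] t] _.
  have : (0 < expo c (mask m (coloured w)) e)%N by rewrite hp ffunE /= !eqxx.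
  by case: c {hp}; rewrite ?u0 ?v0 ffunE.
- case=> ua vb.
  have : (0 < size (mask (map negb m) (coloured w)))%N.
    by rewrite size_mask ?size_map // count_map -has_count has_predC.
  case hp: (mask (map negb m) (coloured w)) => [//|[c e] t] _.
  have : (0 < expo c (mask (map negb m) (coloured w)) e)%N by rewrite hp ffunE /= !eqxx.
  have h0 : forall c' e', expo c' (mask (map negb m) (coloured w)) e' = 0%N.
    move=> c' e'; move: (sp c' e'); case: c'; rewrite ?ua ?vb ?ha ?hb => h;
    exact: addn_id0 h.
  by rewrite h0.
Qed.
End Prim.

Unset Implicit Arguments. Set Strict Implicit.
Local Open Scope ring_scope.

Theorem mainTheorem2 (k : fieldType) (V : finType) (d : nat)
  (H : {set {set V}}) (hd : (0 < d)%N) (hH : uniform d H)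
  (lt : rel (mono (edge H))) (hlt : term_order lt)
  (G : mpoly k (edge H) -> Prop)
  (hG : reduced_groebner lt (@in_toric k V H) G) :
  forall g, G g ->
    exists w : seq (edge H),
      [/\ monomial_walk w, primitive_walk w &
          exists s : k, (s = 1 \/ s = -1) /\
            forall a, pcoef g a = s * walk_binom k w a].
Proof.
move=> g Gg.
have [a [b [lba tab gE Pab]]] := gb_binom hd hH hlt hG Gg.
have e0 : expo false (coloured ([::] : seq (edge H))) = mono0 _.
  by apply/ffunP => e; rewrite !ffunE.
have e0' : expo true (coloured ([::] : seq (edge H))) = mono0 _.
  by apply/ffunP => e; rewrite !ffunE.
have [w [ev ea eb cw]] : exists w', [/\ ~~ odd (size w'), expo false (coloured w') = a,
                 expo true (coloured w') = b & conn w'].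
  apply: (build hd hH tab Pab (n := msize a) (w := [::]) (ra := a) (rb := b)) => //.
  - by rewrite e0 monoMC monoM0.
  - by rewrite e0' monoMC monoM0.
  - Show.
  - by move=> [|x s1] e s2.
have na : a != mono0 _.
  apply/eqP => a0; have : timg b = timg (mono0 (edge H)) by rewrite -tab a0.
  move=> tb0; have b0 : b = mono0 _ by apply: (timg0 hd hH) => v; rewrite tb0 timg_mono0.
  by move: (lt_ne hlt lba); rewrite a0 b0 eqxx.
exists w; split.
- split; [|exact: ev|exact: cw|by apply/balancedP; rewrite ea eb].
  case: (w) ea => [|x w'] // ea'; move: na; by rewrite -ea' e0 eqxx.
- by have := prim Pab ea eb.
- exists 1; split; first by left.
  move=> x; rewrite mul1r gE /walk_binom.
  by rewrite -[walk_expo false w]/(expo false (coloured w)) -[walk_expo true w]/(expo true (coloured w)) ea eb.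
Qed.
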